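(* Let $A$ and $B$ be automata such that $A$ is a forest and $A\le_{*T}B$. Then $A\le_B B$.
   Context: An automaton $A$ consists of a set $\mathrm{states}(A)$ of states, a nonempty set $\mathrm{start}(A)\subseteq\mathrm{states}(A)$ of start states, a set $\mathrm{acts}(A)$ of actions containing a distinguished internal action $\tau$, and a set $\mathrm{steps}(A)\subseteq\mathrm{states}(A)\times\mathrm{acts}(A)\times\mathrm{states}(A)$ of steps; write $s\xrightarrow{a}_A t$ for $(s,a,t)\in\mathrm{steps}(A)$. An execution fragment of $A$ is a finite or infinite alternating sequence $s_0a_1s_1a_2s_2\cdots$ of states and actions, beginning with a state and, if finite, ending with a state, such that $s_{i-1}\xrightarrow{a_i}_A s_i$ for all $i>0$. An execution is an execution fragment whose first state is a start state. The trace of an execution fragment is the subsequence of its non-$\tau$ actions; a trace of $A$ is the trace of some execution of $A$, and $\mathrm{traces}^*(A)$ is the set of finite traces of $A$. $A\le_{*T}B$ means $\mathrm{traces}^*(A)\subseteq\mathrm{traces}^*(B)$. $A$ is a forest if for each state $s$ of $A$ there is exactly one (finite) execution of $A$ whose last state is $s$. For a relation $R$ write $R[s]=\{u\mid (s,u)\in R\}$. A normed backward simulation from $A$ to $B$ is a pair $(b,n)$ where $b\subseteq\mathrm{states}(A)\times\mathrm{states}(B)$ is total (every $s\in\mathrm{states}(A)$ has $b[s]\neq\emptyset$) and $n:(\mathrm{steps}(A)\cup\mathrm{start}(A))\times\mathrm{states}(B)\to S$ for some set $S$ with a well-founded strict order $<$, such that: (1) if $s\in\mathrm{start}(A)$ and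 $u\in b[s]$ then (a) $u\in\mathrm{start}(B)$, or (b) there is $v\in b[s]$ with $v\xrightarrow{\tau}_B u$ and $n(s,v)<n(s,u)$; (2) if $t\xrightarrow{a}_A s$ and $u\in b[s]$ then (a) $u\in b[t]$ and $a=\tau$, or (b) there is $v\in b[t]$ with $v\xrightarrow{a}_B u$, or (c) there is $v\in b[s]$ with $v\xrightarrow{\tau}_B u$ and $n(t\xrightarrow{a}s,v)<n(t\xrightarrow{a}s,u)$. Write $A\le_B B$ if one exists. *)

(* Defs.v *)
From Stdlib Require Import List Relations Wellfounded.
Import ListNotations.
Set Implicit Arguments.

Record automaton (L : Type) := Automaton {
  state : Type;
  start : state -> Prop;
  step  : state -> L -> state -> Prop;
  start_nonempty : exists s, start s
}.
Arguments state {L} a.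
Arguments start {L} a _.
Arguments step {L} a _ _ _.

Section Aut.
Variables (L : Type) (tau : L).

(* A finite execution fragment s0 a1 s1 ... an sn is represented as
   (s0, [(a1,s1); ...; (an,sn)]). *)
Fixpoint frag_valid (A : automaton L) (s0 : state A)
    (r : list (L * state A)) : Prop :=
  match r with
  | [] => True
  | (a, s1) :: r' => step A s0 a s1 /\ frag_valid A s1 r'
  end.

Definition frag_last (A : automaton L) (s0 : state A) (r : list (L * state A))
  : state A := last (map snd r) s0.

Definition fin_execution (A : automaton L) (s0 : state A)
    (r : list (L * state A)) : Prop :=
  start A s0 /\ frag_valid A s0 r.

Inductive is_trace : list L -> list L -> Prop :=
  | tr_nil : is_trace [] []
  | tr_tau : forall l b, is_trace l b -> is_trace (tau :: l) b
  | tr_ext : forall a l b, a <> tau -> is_trace l b -> is_trace (a :: l) (a :: b).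

(* An infinite execution s0 a1 s1 a2 s2 ... given by st : nat -> state,
   ac : nat -> L (ac i = a_i for i >= 1; ac 0 is unused). *)
Definition inf_execution (A : automaton L) (st : nat -> state A)
    (ac : nat -> L) : Prop :=
  start A (st 0) /\ forall i, step A (st i) (ac (S i)) (st (S i)).

Definition acts_prefix (ac : nat -> L) (N : nat) : list L :=
  map (fun i => ac (S i)) (seq 0 N).

Definition fin_traces (A : automaton L) (b : list L) : Prop :=
  (exists s0 r, fin_execution A s0 r /\ is_trace (map fst r) b)
  \/ (exists st ac N, inf_execution A st ac /\
        (forall i, N < i -> ac i = tau) /\ is_trace (acts_prefix ac N) b).

Definition trace_incl (A B : automaton L) : Prop :=
  forall b, fin_traces A b -> fin_traces B b.

Definition forest (A : automaton L) : Prop :=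
  forall s : state A,
    exists s0 r, fin_execution A s0 r /\ frag_last A s0 r = s /\
      forall s0' r', fin_execution A s0' r' -> frag_last A s0' r' = s ->
        s0' = s0 /\ r' = r.

(* Index set steps(A) ∪ start(A): [inl s] stands for the start state s,
   [inr (t,a,s)] for the step t -a-> s. *)
Definition norm_index (A : automaton L) : Type :=
  (state A + (state A * L * state A))%type.

Definition normed_backward_sim (A B : automaton L)
    (W : Type) (lt : W -> W -> Prop)
    (b : state A -> state B -> Prop)
    (n : norm_index A -> state B -> W) : Prop :=
  (forall s, exists u, b s u) /\
  (forall s u, start A s -> b s u ->
     start B u \/
     exists v, b s v /\ step B v tau u /\ lt (n (inl s) v) (n (inl s) u)) /\
  (forall t a s u, step A t a s -> b s u ->
     (b t u /\ a = tau) \/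
     (exists v, b t v /\ step B v a u) \/
     (exists v, b s v /\ step B v tau u /\
        lt (n (inr (t, a, s)) v) (n (inr (t, a, s)) u))).

Definition backward_le (A B : automaton L) : Prop :=
  exists (W : Type) (lt : W -> W -> Prop),
    well_founded lt /\ (forall x y z, lt x y -> lt y z -> lt x z) /\
    exists b n, @normed_backward_sim A B W lt b n.

End Aut.

(* Main.v *)
Require Import Defs.
From Stdlib Require Import List Relations Wellfounded Arith Lia ClassicalEpsilon Classical.
Import ListNotations.

Section Proofs.
Variables (L : Type) (tau : L).

Lemma is_trace_fun l b1 b2 : is_trace tau l b1 -> is_trace tau l b2 -> b1 = b2.
Proof.
  intros H; revert b2; induction H; intros b2 H2; inversion H2; subst; auto.
  - congruence.
  - congruence.
  - f_equal; auto.
Qed.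

Lemma is_trace_app l1 l2 b1 b2 : is_trace tau l1 b1 -> is_trace tau l2 b2 ->
  is_trace tau (l1 ++ l2) (b1 ++ b2).
Proof. intros H H2; induction H; simpl; try constructor; auto. Qed.

Lemma is_trace_split l1 l2 b : is_trace tau (l1 ++ l2) b ->
  exists b1 b2, b = b1 ++ b2 /\ is_trace tau l1 b1 /\ is_trace tau l2 b2.
Proof.
  revert b; induction l1; simpl; intros b H.
  - exists [], b; repeat split; auto; constructor.
  - inversion H as [|? ? Hx|? ? ? Ha Hx]; subst.
    + destruct (IHl1 _ Hx) as (b1 & b2 & -> & h1 & h2).
      exists b1, b2; repeat split; auto; constructor; auto.
    + destruct (IHl1 _ Hx) as (b1 & b2 & -> & h1 & h2).
      exists (a :: b1), b2; repeat split; auto; constructor; auto.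
Qed.

Lemma is_trace_last l c b : is_trace tau (l ++ [c]) b ->
  (c = tau /\ is_trace tau l b) \/
  (c <> tau /\ exists b1, b = b1 ++ [c] /\ is_trace tau l b1).
Proof.
  intros H; destruct (is_trace_split _ _ _ H) as (b1 & b2 & -> & h1 & h2).
  inversion h2 as [|? ? Hx|? ? ? Ha Hx]; subst.
  - inversion Hx; subst. left; rewrite app_nil_r; auto.
  - inversion Hx; subst. right; split; auto; exists b1; auto.
Qed.

Lemma frag_valid_app (A : automaton L) s0 r1 r2 :
  frag_valid A s0 (r1 ++ r2) <-> frag_valid A s0 r1 /\ frag_valid A (frag_last A s0 r1) r2.
Proof.
  revert s0; induction r1 as [|[a s1] r1 IH]; intros s0; simpl.
  - unfold frag_last; simpl; tauto.
  - rewrite IH. unfold frag_last; simpl.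
    assert (last (s1 :: map snd r1) s0 = last (map snd r1) s1) as E.
    { generalize (map snd r1) s1 s0. clear. induction l as [|y l IH]; intros x d; auto.
      change (last (y :: l) d = last (y :: l) x). rewrite !IH; reflexivity. }
    simpl in E. rewrite E. tauto.
Qed.

Lemma frag_last_snoc (A : automaton L) s0 r c x :
  frag_last A s0 (r ++ [(c, x)]) = x.
Proof. unfold frag_last; rewrite map_app; simpl; apply last_last. Qed.

Definition trS (A : automaton L) (s : state A) (b : list L) : Prop :=
  exists s0 r, fin_execution A s0 r /\ frag_last A s0 r = s /\ is_trace tau (map fst r) b.

Lemma inf_frag (A : automaton L) st ac k m :
  (forall i, step A (st i) (ac (S i)) (st (S i))) ->
  frag_valid A (st m) (map (fun i => (ac (S i), st (S i))) (seq m k)).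
Proof.
  intros H; revert m; induction k; intros m; simpl; auto.
Qed.

Lemma fin_traces_ex (A : automaton L) b : fin_traces tau A b ->
  exists s0 r, fin_execution A s0 r /\ is_trace tau (map fst r) b.
Proof.
  intros [H | (st & ac & N & [Hs Hst] & _ & Ht)]; auto.
  exists (st 0), (map (fun i => (ac (S i), st (S i))) (seq 0 N)).
  split; [split; auto; apply inf_frag; auto|].
  rewrite map_map; simpl; exact Ht.
Qed.

Lemma min_exists (P : nat -> Prop) : (exists k, P k) ->
  exists k, P k /\ forall k', P k' -> k <= k'.
Proof.
  intros [k Hk]. revert Hk. induction k as [k IH] using lt_wf_ind; intros Hk.
  destruct (classic (exists k', P k' /\ k' < k)) as [(k' & h1 & h2)|Hn].
  - apply (IH k' h2 h1).
  - exists k; split; auto. intros k' Hk'.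
    destruct (le_lt_dec k k'); auto. exfalso; apply Hn; eauto.
Qed.

Variables (A B : automaton L).
Hypothesis Hfor : forest A.
Hypothesis Hincl : trace_incl tau A B.

Lemma trS_fun s b1 b2 : trS A s b1 -> trS A s b2 -> b1 = b2.
Proof.
  intros (s1 & r1 & e1 & l1 & t1) (s2 & r2 & e2 & l2 & t2).
  destruct (Hfor s) as (s0 & r & e & l & U).
  destruct (U _ _ e1 l1) as [-> ->]; destruct (U _ _ e2 l2) as [-> ->].
  eapply is_trace_fun; eauto.
Qed.

Lemma trS_ex s : exists b, trS A s b.
Proof.
  destruct (Hfor s) as (s0 & r & e & l & _).
  assert (exists b, is_trace tau (map fst r) b) as [b Hb].
  { clear. induction (map fst r) as [|a l IH].
    - exists []; constructor.
    - destruct IH as [b Hb]. destruct (classic (a = tau)) as [->|Hn].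
      + exists b; constructor; auto.
      + exists (a :: b); constructor; auto. }
  exists b, s0, r; auto.
Qed.

Lemma trS_step t a s bt : step A t a s -> trS A t bt ->
  (a = tau /\ trS A s bt) \/ (a <> tau /\ trS A s (bt ++ [a])).
Proof.
  intros Hst (t0 & r & [e1 e2] & l & Ht).
  assert (fin_execution A t0 (r ++ [(a, s)])) as E.
  { split; auto. apply frag_valid_app; split; auto. rewrite l; simpl; auto. }
  destruct (classic (a = tau)) as [->|Hn].
  - left; split; auto. exists t0, (r ++ [(tau, s)]); split; auto; split.
    + apply frag_last_snoc.
    + rewrite map_app, <- (app_nil_r bt). apply is_trace_app; auto.
      constructor; constructor.
  - right; split; auto. exists t0, (r ++ [(a, s)]); split; auto; split.
    + apply frag_last_snoc.
    + rewrite map_app. apply is_trace_app; auto. constructor; auto; constructor.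
Qed.

Definition P (s : state A) (u : state B) (k : nat) : Prop :=
  exists u0 r, fin_execution B u0 r /\ frag_last B u0 r = u /\ length r = k /\
    exists b, trS A s b /\ is_trace tau (map fst r) b.

Definition bb (s : state A) (u : state B) : Prop := exists k, P s u k.

Definition nrm (s : state A) (u : state B) : nat :=
  epsilon (inhabits 0) (fun k => P s u k /\ forall k', P s u k' -> k <= k').

Lemma nrm_spec s u : bb s u -> P s u (nrm s u) /\ forall k', P s u k' -> nrm s u <= k'.
Proof.
  intros H. unfold nrm. apply epsilon_spec. apply min_exists; auto.
Qed.

Definition nn (i : norm_index A) (u : state B) : nat :=
  match i with inl s => nrm s u | inr p => nrm (snd p) u end.

Lemma main_step s u b : bb s u -> trS A s b ->
  exists u0 r, fin_execution B u0 r /\ frag_last B u0 r = u /\ length r = nrm s u /\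
    is_trace tau (map fst r) b.
Proof.
  intros H Hb. destruct (nrm_spec _ _ H) as [(u0 & r & e & l & len & b' & hb' & ht) _].
  rewrite (trS_fun _ _ _ Hb hb') ; eauto 10.
Qed.

Lemma snoc_case (u0 : state B) r u :
  fin_execution B u0 r -> frag_last B u0 r = u -> r = [] \/
  exists r' c, r = r' ++ [(c, u)] /\ fin_execution B u0 r' /\
    step B (frag_last B u0 r') c u.
Proof.
  intros [e1 e2] l. destruct r as [|p r0] using rev_ind; [left; auto|right].
  clear IHr0. destruct p as [c x]. rewrite frag_last_snoc in l; subst x.
  apply frag_valid_app in e2 as [h1 h2]. simpl in h2.
  exists r0, c; repeat split; tauto.
Qed.

Lemma last_tau_case s u0 r' c u b :
  fin_execution B u0 r' -> step B (frag_last B u0 r') c u -> trS A s b ->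
  is_trace tau (map fst (r' ++ [(c, u)])) b -> length (r' ++ [(c,u)]) = nrm s u ->
  c = tau -> bb s (frag_last B u0 r') /\ nrm s (frag_last B u0 r') < nrm s u.
Proof.
  intros e st hb ht len ->. rewrite map_app in ht.
  apply is_trace_last in ht as [[_ ht]|[C _]]; [|exfalso; apply C; reflexivity].
  assert (P s (frag_last B u0 r') (length r')) as HP.
  { exists u0, r'; split; [exact e|]; split; [reflexivity|]; split; [reflexivity|]. exists b; split; [exact hb|exact ht]. }
  split; [exists (length r'); auto|].
  destruct (nrm_spec _ _ (ex_intro _ _ HP)) as [_ m].
  specialize (m _ HP). rewrite length_app in len; simpl in len. lia.
Qed.

Lemma bb_of s u b : trS A s b ->
  (exists u0 r, fin_execution B u0 r /\ frag_last B u0 r = u /\ is_trace tau (map fst r) b) ->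
  bb s u.
Proof. intros hb (u0 & r & e & l & t). exists (length r), u0, r; split; [exact e|]; split; [exact l|]; split; [reflexivity|]; eauto. Qed.

Lemma bb_trS s u : bb s u -> exists b, trS A s b.
Proof. intros (k & u0 & r & e & l & len & b & hb & _); eauto. Qed.

End Proofs.

Theorem mainTheorem6 (L : Type) (tau : L) (A B : automaton L) :
  forest A -> trace_incl tau A B -> backward_le tau A B.
Proof.
  intros Hfor Hincl.
  exists nat, lt. split; [apply lt_wf|]. split; [intros; lia|].
  exists (bb L tau A B), (nn L tau A B). split; [|split].
  - intros s. destruct (trS_ex L tau A Hfor s) as [b Hb].
    assert (fin_traces tau A b) as Ht.
    { destruct Hb as (s0 & r & e & l & t). left; eauto. }
    apply Hincl, fin_traces_ex in Ht as (u0 & rB & eB & tB).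
    exists (frag_last B u0 rB). eapply bb_of; [exact Hb|]. eauto.
  - intros s u Hs Hb.
    assert (trS L tau A s []) as H0.
    { exists s, []; repeat split; auto. constructor. }
    destruct (main_step L tau A B Hfor s u [] Hb H0) as (u0 & r & e & l & len & t).
    destruct (snoc_case _ _ _ _ _ e l) as [->|(r' & c & -> & e' & st)].
    + left. unfold frag_last in l; simpl in l; subst. apply e.
    + right. pose proof t as t'. rewrite map_app in t'.
      apply is_trace_last in t' as [[Hc _]|[_ (b1 & Hb1 & _)]].
      * destruct (last_tau_case L tau A B _ _ _ _ _ _ e' st H0 t len Hc) as [h1 h2].
        simpl in Hc; subst c. exists (frag_last B u0 r'); simpl; auto.
      * destruct b1; discriminate.
  - intros t a s u Hst Hb. simpl.
    destruct (trS_ex L tau A Hfor t) as [bt Ht].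
    destruct (trS_step L tau A t a s bt Hst Ht) as [[Ha Hs]|[Ha Hs]].
    + left. split; auto.
      destruct (main_step L tau A B Hfor s u bt Hb Hs) as (u0 & r & e & l & _ & tr).
      eapply bb_of; eauto.
    + destruct (main_step L tau A B Hfor s u _ Hb Hs) as (u0 & r & e & l & len & tr).
      destruct (snoc_case _ _ _ _ _ e l) as [->|(r' & c & -> & e' & st)].
      * simpl in tr. inversion tr. destruct bt; discriminate.
      * pose proof tr as t'. rewrite map_app in t'.
        apply is_trace_last in t' as [[Hc _]|[_ (b1 & Hb1 & tb1)]].
        -- destruct (last_tau_case L tau A B _ _ _ _ _ _ e' st Hs tr len Hc) as [h1 h2].
           simpl in Hc; subst c. right; right. exists (frag_last B u0 r'); auto.
        -- apply app_inj_tail in Hb1 as [E1 E2]. simpl in E2. subst b1 c.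
           right; left. exists (frag_last B u0 r'); split; auto.
           eapply bb_of; eauto.
Qed.
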